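(* Let $Y$ be a CFG-space over a Boolean algebra $B$ and let $y_0,\dots,y_n\in Y$ be such that every element of $Y$ is a convex combination of $y_0,\dots,y_n$ and $d(y_i,y_j)=1$ for all $i\ne j$. Let $f:Y\to B$ be a contractive map (where $B$ carries the metric $d(a,b)=a\triangle b$) such that $f(y_i)\vee f(y_j)=1$ for all $i\ne j$. Then the equation $f(x)=0$ has at most one solution $x\in Y$.
   Context: A Boolean metric space over $B$ is a set with symmetric $d$ into $B$, $d(x,y)=0$ iff $x=y$, $d(x,z)\le d(x,y)\vee d(y,z)$. A map $f$ is contractive if $d(f(x),f(y))\le d(x,y)$. A partition of $B$ is a finite family of pairwise disjoint elements with supremum $1$; $x$ is a convex combination of $x_0,\dots,x_n$ with coefficients a partition $a_0,\dots,a_n$ if $a_i\wedge d(x,x_i)=0$ for all $i$. A CFG-space is a Boolean metric space that is convex (every such convex combination of its points exists in it) and finitely generated (some finite subset $S$ has every point as a convex combination of points of $S$). $\triangle$ is symmetric difference. *)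

(* Defs.v *)
(* A Boolean algebra is a [ctbDistrLatticeType]
   (complemented distributive lattice with top and bottom). *)
From HB Require Import structures.
From mathcomp Require Import all_boot all_order.
Set Implicit Arguments. Unset Strict Implicit. Unset Printing Implicit Defensive.
Import Order.TTheory.
Local Open Scope order_scope.

Section Defs.
Context {disp : Order.disp_t} {B : ctbDistrLatticeType disp}.

Definition symdiff (a b : B) : B := (a `\` b) `|` (b `\` a).

Definition boolean_metric {X : Type} (d : X -> X -> B) : Prop :=
  [/\ (forall x y, d x y = d y x),
      (forall x y, d x y = \bot <-> x = y) &
      (forall x y z, d x z <= d x y `|` d y z)].

Definition is_partition (a : seq B) : Prop :=
  (forall i j, (i < size a)%N -> (j < size a)%N -> i <> j ->
     nth \bot a i `&` nth \bot a j = \bot) /\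
  \join_(c <- a) c = \top.

Definition convex_comb {X : Type} (d : X -> X -> B) (x : X)
    (xs : seq X) (a : seq B) : Prop :=
  size xs = size a /\ is_partition a /\
  forall i, (i < size a)%N -> forall x0 : X,
    nth \bot a i `&` d x (nth x0 xs i) = \bot.

Definition convex_space {X : Type} (d : X -> X -> B) : Prop :=
  forall (xs : seq X) (a : seq B), size xs = size a -> is_partition a ->
    exists x, convex_comb d x xs a.

Definition fin_generated {X : Type} (d : X -> X -> B) : Prop :=
  exists S : seq X, forall x, exists a, convex_comb d x S a.

Definition CFG_space {X : Type} (d : X -> X -> B) : Prop :=
  [/\ boolean_metric d, convex_space d & fin_generated d].

Definition contractive_to_B {X : Type} (d : X -> X -> B) (f : X -> B) : Prop :=
  forall x y, symdiff (f x) (f y) <= d x y.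

End Defs.

(* Main.v *)
Require Import Defs.
From HB Require Import structures.
From mathcomp Require Import all_boot all_order.
Import Order.TTheory Order.CBDistrLatticeTheory.
Local Open Scope order_scope.

Lemma meet_join_bot (disp : Order.disp_t) (B : ctbDistrLatticeType disp)
  (s : seq B) (b : B) :
  (forall i, (i < size s)%N -> b `&` nth \bot s i = \bot) ->
  b `&` \join_(c <- s) c = \bot.
Proof.
elim: s => [|c s IH] H; first by rewrite big_nil meetx0.
rewrite big_cons meetUr (H 0%N erefl) join0x; apply: IH => i Hi.
exact: (H i.+1).
Qed.

Lemma le_bot_eq (disp : Order.disp_t) (B : ctbDistrLatticeType disp) (x y : B) :
  x <= y -> y = \bot -> x = \bot.
Proof. by move=> Hxy Hy; apply/eqP; rewrite -lex0 -Hy. Qed.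

Theorem lemma3p3 (disp : Order.disp_t) (B : ctbDistrLatticeType disp)
  (Y : Type) (d : Y -> Y -> B) (ys : seq Y) (f : Y -> B) :
  CFG_space d ->
  (0 < size ys)%N ->
  (forall x, exists a, convex_comb d x ys a) ->
  (forall y0 : Y, forall i j, (i < size ys)%N -> (j < size ys)%N -> i <> j ->
     d (nth y0 ys i) (nth y0 ys j) = \top) ->
  contractive_to_B d f ->
  (forall y0 : Y, forall i j, (i < size ys)%N -> (j < size ys)%N -> i <> j ->
     f (nth y0 ys i) `|` f (nth y0 ys j) = \top) ->
  forall x x' : Y, f x = \bot -> f x' = \bot -> x = x'.
Proof.
move=> [[dsym d0 dtri] _ _] _ Hgen _ Hcon Hf x x' fx fx'.
have [a [sa [[_ ja] ca]]] := Hgen x.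
have [a' [sa' [[_ ja'] ca']]] := Hgen x'.
have key : forall z (c : seq B), f z = \bot -> size ys = size c ->
   (forall i, (i < size c)%N -> forall x0 : Y, nth \bot c i `&` d z (nth x0 ys i) = \bot) ->
   forall i, (i < size c)%N -> nth \bot c i `&` f (nth x ys i) = \bot.
  move=> z c fz sc cc i Hi; apply: le_bot_eq (cc i Hi x).
  apply: leI2 => //; have := Hcon z (nth x ys i).
  by rewrite fz /symdiff diff0x diffx0 join0x.
apply/d0.
rewrite -[d x x']meetx1 -ja; apply: meet_join_bot => i Hi.
rewrite -[_ `&` _]meetx1 -ja'; apply: meet_join_bot => j Hj.
have Hi' : (i < size ys)%N by rewrite sa.
have Hj' : (j < size ys)%N by rewrite sa'.
case: (eqVneq i j) => [<-|ij].
  apply: (@le_bot_eq _ _ _ ((nth \bot a i `&` d x (nth x ys i)) `|`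
                          (nth \bot a' i `&` d x' (nth x ys i)))).
    apply: le_trans (_ : (d x (nth x ys i) `|` d (nth x ys i) x') `&`
                          (nth \bot a i `&` nth \bot a' i) <= _).
      by rewrite meetA; apply: leI2 => //; apply: leI2 => //; apply: dtri.
    rewrite meetUl; apply: leU2.
      by rewrite lexI leIl andbT; apply: leIxr; apply: leIl.
    by rewrite [d _ x']dsym lexI leIl andbT; apply: leIxr; apply: leIr.
  by rewrite ca // ca' // ?join0x // -sa'.
apply: (@le_bot_eq _ _ _ ((nth \bot a i `&` f (nth x ys i)) `|`
                        (nth \bot a' j `&` f (nth x ys j)))).
  have ij' : i <> j by apply/eqP.
  apply: le_trans (_ : nth \bot a i `&` nth \bot a' j `&`
      (f (nth x ys i) `|` f (nth x ys j)) <= _).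
    by rewrite (Hf x i j Hi' Hj' ij') meetx1; apply: leI2 => //; apply: leIr.
  rewrite meetUr; apply: leU2.
    by rewrite lexI leIr andbT; apply: leIxl; apply: leIl.
  by rewrite lexI leIr andbT; apply: leIxl; apply: leIr.
rewrite (key x a fx sa ca i Hi) (key x' a' fx' sa' ca' j Hj) join0x //.
Qed.
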